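(* Let $\beta>0$ and let $F$ be a fixed labelled graph on $v$ vertices. Then there exists $C>0$ such that the following holds for $1\leq t\leq 2^n$. If $V$ is a set of $n$ vertices, ${\mathcal F}_1,\dots,{\mathcal F}_t$ are families of labelled $v$-element subsets of $V$ with $|{\mathcal F}_i|\geq\beta n^v$ for each $i$, and $p=p(n)$ is such that $\Phi_F\geq Cn$, then asymptotically almost surely, for each $i\in[t]$ there is an embedding of $F$ in $G(n,p)$ on $V$ onto a set in ${\mathcal F}_i$ which respects the labellings.
   Context: $G(n,p)$ is the binomial random graph on $V$. For a graph $F$, $\Phi_F=\Phi_F(n,p):=\min\{n^{v_H}p^{e_H}:H\subseteq F,\ e_H>0\}$, where $v_H,e_H$ are the numbers of vertices and edges of $H$. An embedding respects labellings if the $j$-th vertex of $F$ is mapped to the $j$-th vertex of the labelled set. Asymptotically almost surely means with probability tending to $1$ as $n\to\infty$. *)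

(* Defs.v *)
From mathcomp Require Import all_boot all_order all_algebra.
From mathcomp Require Export reals.
Set Implicit Arguments. Unset Strict Implicit. Unset Printing Implicit Defensive.
Import Order.TTheory GRing.Theory Num.Theory.
Local Open Scope ring_scope.

Definition pairs (n : nat) : {set {set 'I_n}} := [set e : {set 'I_n} | #|e| == 2%N].

(* A graph on 'I_n is an edge set E \subset pairs n.
   Probability of an event A under the binomial random graph G(n,p). *)
Definition Gnp_prob {R : realType} (n : nat) (p : R)
  (A : pred {set {set 'I_n}}) : R :=
  \sum_(E : {set {set 'I_n}} | (E \subset pairs n) && A E)
     p ^+ #|E| * (1 - p) ^+ (#|pairs n| - #|E|).

Definition subgraph (v : nat) (EF : {set {set 'I_v}})
  (S : {set 'I_v}) (EH : {set {set 'I_v}}) : Prop :=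
  EH \subset EF /\ (forall e, e \in EH -> e \subset S).

(* Phi_F(n,p) >= c, where Phi_F = min { n^{v_H} p^{e_H} : H subgraph of F, e_H > 0 }
   (min over the empty family being +infinity). *)
Definition Phi_ge {R : realType} (v : nat) (EF : {set {set 'I_v}})
  (n : nat) (p : R) (c : R) : Prop :=
  forall (S : {set 'I_v}) (EH : {set {set 'I_v}}),
    subgraph EF S EH -> (0 < #|EH|)%N ->
    c <= n%:R ^+ #|S| * p ^+ #|EH|.

(* Event: for each i there is a labelled set f in Fam i (f j = image of
   the j-th vertex of F) onto which F embeds in the graph E, respecting labels. *)
Definition all_embed (v n t : nat) (EF : {set {set 'I_v}})
  (Fam : 'I_t -> {set {ffun 'I_v -> 'I_n}}) : pred {set {set 'I_n}} :=
  fun E => [forall i : 'I_t, [exists f in Fam i,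
              [forall e in EF, (f @: e) \in E]]].

(* Main.v *)
Require Import Defs.
From mathcomp Require Import all_boot all_order all_algebra.
From mathcomp Require Import reals.
From mathcomp Require Import sequences exp.
From mathcomp Require Import ring lra.
Set Implicit Arguments. Unset Strict Implicit. Unset Printing Implicit Defensive.
Import Order.TTheory GRing.Theory Num.Theory.

Lemma card_setT (T : finType) : #|{set T}| = 2 ^ #|T|.
Proof. rewrite -cardsT -card_powerset. apply: eq_card => A. by rewrite !inE subsetT. Qed.

Lemma exp_le_pow (a v k : nat) : (0 < v)%N -> (a <= v)%N -> (k <= v)%N -> (a ^ k <= v ^ v)%N.
Proof.
move=> v0 av kv; apply: (@leq_trans (v ^ k)); last exact: leq_pexp2l.
by case: k kv => [|k] _ //; rewrite leq_exp2r.
Qed.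

Lemma count_nat (v n : nat) (f : {ffun 'I_v -> 'I_n}) : (0 < v)%N ->
  (\sum_(g : {ffun 'I_v -> 'I_n}) n ^ #|[set x | g x \in f @: [set: 'I_v]]|
     <= 2 ^ v * v ^ v * n ^ v)%N.
Proof.
move=> v0; set Im := f @: [set: 'I_v].
have ImC : (#|Im| <= v)%N by rewrite (leq_trans (leq_imset_card _ _)) // cardsT card_ord.
rewrite (partition_big (fun g : {ffun 'I_v -> 'I_n} => [set x | g x \in Im]) predT) //=.
have bound : forall S : {set 'I_v},
  (\sum_(g : {ffun 'I_v -> 'I_n} | [set x | g x \in Im] == S) n ^ #|[set x | g x \in Im]| <= v ^ v * n ^ v)%N.
  move=> S.
  pose F := fun x : 'I_v => if x \in S then [pred y | y \in Im] else predT.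
  apply: (@leq_trans (\sum_(g in family F) n ^ #|S|)).
    rewrite [X in (_ <= X)%N]big_mkcond [X in (X <= _)%N]big_mkcond /=.
    apply: leq_sum => g _; case: eqP => // eS.
    have gF : g \in family F.
      apply/familyP => x; rewrite /F; case: ifP => // xS.
      by move: xS; rewrite -eS inE.
    by rewrite gF eS.
  rewrite sum_nat_const card_family foldrE big_map big_enum /=.
  have cF : forall x, #|F x| = if x \in S then #|Im| else n.
    move=> x; rewrite /F; case: ifP => _; last by rewrite cardT size_enum_ord.
    by apply: eq_card => y; rewrite inE.
  rewrite (eq_bigr (fun x => if x \in S then #|Im| else n)); last by move=> x _; exact: cF.
  rewrite (bigID (mem S)) /=.
  rewrite (eq_bigr (fun _ => #|Im|)); last by move=> x ->.
  rewrite [X in (_ * X * _ <= _)%N](eq_bigr (fun _ => n)); last by move=> x /negbTE ->.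
  rewrite !prod_nat_const -mulnA -expnD.
  have -> : (#|(fun i : 'I_v => i \notin S)| + #|S| = v)%N.
    by rewrite addnC cardC card_ord.
  rewrite leq_mul2r; apply/orP; right; apply: exp_le_pow => //.
  by apply: (leq_trans (max_card _)); rewrite card_ord.
apply: (@leq_trans (\sum_(S : {set 'I_v}) v ^ v * n ^ v)); first by apply: leq_sum => S _.
by rewrite sum_nat_const card_setT card_ord mulnA.
Qed.

Local Open Scope ring_scope.

Section SetInd.
Variable T : finType.
Lemma set_ind (P : {set T} -> Prop) : P set0 ->
  (forall (x : T) (U : {set T}), x \notin U -> P U -> P (x |: U)) -> forall U, P U.
Proof.
move=> P0 PS U; move: {2}#|U| (erefl #|U|) => k; elim: k U => [|k IH] U hU.
  by move/eqP: hU; rewrite cards_eq0 => /eqP->.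
have [x xU] : exists x, x \in U by apply/set0Pn; rewrite -cards_eq0 hU.
rewrite -(setD1K xU); apply: PS; first by rewrite !inE eqxx.
apply: IH; move: hU; rewrite (cardsD1 x U) xU add1n; by case.
Qed.
End SetInd.

Section Ex.
Variable R : realType.
Variable T : finType.
Variable p : R.

Definition wt (U E : {set T}) : R := p ^+ #|E| * (1 - p) ^+ (#|U| - #|E|).
Definition Ex (U : {set T}) (h : {set T} -> R) : R :=
  \sum_(E : {set T} | E \subset U) wt U E * h E.

Lemma Ex_set0 (h : {set T} -> R) : Ex set0 h = h set0.
Proof.
rewrite /Ex (eq_bigl (pred1 set0)) ?big_pred1_eq; last by move=> E; rewrite subset0.
by rewrite /wt cards0 subnn !expr0 !mul1r.
Qed.

Lemma Ex_step (x : T) (U : {set T}) (h : {set T} -> R) : x \notin U ->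
  Ex (x |: U) h = p * Ex U (fun E => h (x |: E)) + (1 - p) * Ex U h.
Proof.
move=> xU; rewrite /Ex (bigID (fun E : {set T} => x \in E)) /=; congr (_ + _).
- rewrite (reindex_onto (fun E => x |: E) (fun E => E :\ x)) /=; last first.
    by move=> E /andP[_ xE]; rewrite setD1K.
  rewrite mulr_sumr; apply: eq_big => [E|E EU].
    rewrite setU11 andbT; case EU: (E \subset U).
      have xE : x \notin E by apply: contra xU; apply: (subsetP EU).
      by rewrite setU1K // eqxx setUS.
    apply/negbTE/andP => -[s /eqP e]; move/negbT: EU => /negP; apply.
    apply/subsetP => y yE; have := subsetP s y; rewrite !inE yE orbT => /(_ isT).
    case/orP => // /eqP yx; move: yE; rewrite -e yx !inE eqxx //.
  have xE : x \notin E by move: EU => /andP[_ /eqP <-]; rewrite !inE eqxx.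
  rewrite /wt !cardsU1 xU xE /= !add1n subSS exprS; by rewrite !mulrA.
- rewrite mulr_sumr; apply: eq_big => [E|E /andP[EU xE]].
    apply/andP/idP => [[s xE]|EU].
      apply/subsetP => y yE; have := subsetP s y yE; rewrite !inE.
      by case/orP => // /eqP yx; move: xE; rewrite -yx yE.
    split; first by apply: subset_trans EU (subsetUr _ _).
    by apply: contra xU; apply: (subsetP EU).
  have EU' : E \subset U.
    apply/subsetP => y yE; have := subsetP EU y yE; rewrite !inE.
    by case/orP => // /eqP yx; move: xE; rewrite -yx yE.
  rewrite /wt cardsU1 xU add1n subSn ?subset_leq_card // exprS.
  by rewrite mulrA [p ^+ _ * _]mulrC !mulrA.
Qed.

Lemma Ex_ext (U : {set T}) (h1 h2 : {set T} -> R) : (forall E : {set T}, E \subset U -> h1 E = h2 E) -> Ex U h1 = Ex U h2.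
Proof. by move=> H; apply: eq_bigr => E EU; rewrite H. Qed.

Lemma Ex_const (U : {set T}) (c : R) : Ex U (fun _ => c) = c.
Proof.
elim/set_ind: U => [|x U xU IH]; first by rewrite Ex_set0.
by rewrite Ex_step // IH; ring.
Qed.

Lemma Ex_add (U : {set T}) (h1 h2 : {set T} -> R) : Ex U (fun E => h1 E + h2 E) = Ex U h1 + Ex U h2.
Proof. by rewrite /Ex -big_split; apply: eq_bigr => E _; rewrite mulrDr. Qed.

Lemma Ex_scale (U : {set T}) (c : R) (h : {set T} -> R) : Ex U (fun E => c * h E) = c * Ex U h.
Proof. by rewrite /Ex mulr_sumr; apply: eq_bigr => E _; rewrite mulrCA. Qed.

Lemma Ex_opp (U : {set T}) (h : {set T} -> R) : Ex U (fun E => - h E) = - Ex U h.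
Proof. by rewrite -mulN1r -Ex_scale; apply: Ex_ext => E _; rewrite mulN1r. Qed.

Lemma Ex_sub (U : {set T}) (h1 h2 : {set T} -> R) : Ex U (fun E => h1 E - h2 E) = Ex U h1 - Ex U h2.
Proof. by rewrite Ex_add Ex_opp. Qed.

Lemma Ex_sum (U : {set T}) (I : Type) (r : seq I) (P : pred I) (F : I -> {set T} -> R) :
  Ex U (fun E => \sum_(i <- r | P i) F i E) = \sum_(i <- r | P i) Ex U (F i).
Proof.
rewrite /Ex exchange_big /=; apply: eq_bigr => E _; by rewrite mulr_sumr.
Qed.

Hypothesis p01 : 0 <= p <= 1.

Lemma wt_ge0 (U E : {set T}) : 0 <= wt U E.
Proof. case/andP: p01 => p0 p1; by rewrite /wt mulr_ge0 // exprn_ge0 // subr_ge0. Qed.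

Lemma Ex_le (U : {set T}) (h1 h2 : {set T} -> R) : (forall E : {set T}, E \subset U -> h1 E <= h2 E) -> Ex U h1 <= Ex U h2.
Proof. move=> H; apply: ler_sum => E EU; by rewrite ler_wpM2l ?wt_ge0 ?H. Qed.

Lemma Ex_ge0 (U : {set T}) (h : {set T} -> R) : (forall E : {set T}, E \subset U -> 0 <= h E) -> 0 <= Ex U h.
Proof. by move=> H; rewrite -(Ex_const U 0); apply: Ex_le. Qed.


Lemma subU1E (x : T) (X E : {set T}) : (X \subset x |: E) = (X :\ x \subset E).
Proof.
apply/subsetP/subsetP => H y.
  by rewrite !inE => /andP[yx /H]; rewrite !inE (negbTE yx).
move=> yX; rewrite !inE; case: (y =P x) => //= yx; apply: H.
by rewrite !inE yX andbT; apply/eqP.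
Qed.

Lemma subU1E' (x : T) (X E : {set T}) : x \notin X -> (X \subset x |: E) = (X \subset E).
Proof.
move=> xX; rewrite subU1E; suff -> : X :\ x = X by [].
apply/setP => y; rewrite !inE; case: (y =P x) => // ->; by rewrite (negbTE xX).
Qed.

Lemma Ex_indep (U X : {set T}) (B : {set T} -> R) : X \subset U -> (forall E : {set T}, B (E :\: X) = B E) ->
  Ex U (fun E => (X \subset E)%:R * B E) = p ^+ #|X| * Ex U B.
Proof.
move: X B; elim/set_ind: U => [|x U xU IH] X B XU HB.
  move: XU; rewrite subset0 => /eqP ->; by rewrite !Ex_set0 sub0set cards0 !mul1r.
rewrite !Ex_step //.
have BxE : forall E, x \in X -> B (x |: E) = B E.
  move=> E xX; rewrite -HB -[in RHS]HB; congr B; apply/setP => y.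
  by rewrite !inE; case: (y =P x) => // ->; rewrite xX.
case: (boolP (x \in X)) => xX.
- have X'U : X :\ x \subset U by rewrite -subU1E.
  have HB' : forall E, B (E :\: (X :\ x)) = B E.
    move=> E; rewrite -HB -[in RHS]HB; congr B; apply/setP => y.
    by rewrite !inE; case: (y =P x) => [->|]; rewrite ?xX //=; case: (y \in X).
  rewrite (Ex_ext (h2 := fun E => (X :\ x \subset E)%:R * B E)); last first.
    by move=> E _; rewrite subU1E BxE.
  rewrite IH // (Ex_ext (h1 := fun E => (X \subset E)%:R * B E) (h2 := fun _ => 0) (U := U)); last first.
    move=> E EU; case: (boolP (X \subset E)) => [XE|nXE]; last by rewrite mul0r.
    by move: xU; rewrite (subsetP EU) // (subsetP XE).
  rewrite Ex_const (Ex_ext (h2 := B) (U := U)); last by move=> E _; rewrite BxE.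
  rewrite (cardsD1 x X) xX add1n exprS; ring.
- have XU' : X \subset U by rewrite -(subU1E' U xX).
  have HB' : forall E, B (x |: (E :\: X)) = B (x |: E).
    move=> E; rewrite -HB -[in RHS]HB; congr B; apply/setP => y.
    by rewrite !inE; case: (y =P x) => [->|]; rewrite ?xX //=; case: (y \in X).
  rewrite (Ex_ext (h2 := fun E => (X \subset E)%:R * B (x |: E))); last first.
    by move=> E _; rewrite subU1E'.
  rewrite (IH X (fun E => B (x |: E))) // IH //; ring.
Qed.

Lemma Ex_harris (U : {set T}) (h g : {set T} -> R) :
  (forall E F : {set T}, E \subset F -> h E <= h F) -> (forall E F : {set T}, E \subset F -> g F <= g E) ->
  Ex U (fun E => h E * g E) <= Ex U h * Ex U g.
Proof.
move: h g; elim/set_ind: U => [|x U xU IH] h g Hh Hg; first by rewrite !Ex_set0.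
rewrite !Ex_step //.
have I1 := IH (fun E => h (x |: E)) (fun E => g (x |: E)).
have I0 := IH h g Hh Hg.
have a01 : Ex U h <= Ex U (fun E => h (x |: E)).
  by apply: Ex_le => E _; apply: Hh; apply: subsetUr.
have b01 : Ex U (fun E => g (x |: E)) <= Ex U g.
  by apply: Ex_le => E _; apply: Hg; apply: subsetUr.
have {}I1 : Ex U (fun E => h (x |: E) * g (x |: E)) <=
   Ex U (fun E => h (x |: E)) * Ex U (fun E => g (x |: E)).
  apply: I1 => E F EF; [apply: Hh | apply: Hg]; exact: setUS.
move: I0 I1 a01 b01.
set a1 := Ex U (fun E => h (x |: E)); set a0 := Ex U h.
set b1 := Ex U (fun E => g (x |: E)); set b0 := Ex U g.
set X1 := Ex U (fun E => h (x |: E) * g (x |: E)).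
set X0 := Ex U (fun E => h E * g E) => I0 I1 a01 b01.
case/andP: p01 => p0 p1.
have k : 0 <= p * (1 - p) * ((a1 - a0) * (b0 - b1)).
  by rewrite !mulr_ge0 // subr_ge0.
have e1 : p * X1 <= p * (a1 * b1) by rewrite ler_wpM2l.
have e0 : (1 - p) * X0 <= (1 - p) * (a0 * b0) by rewrite ler_wpM2l // subr_ge0.
have -> : (p * a1 + (1 - p) * a0) * (p * b1 + (1 - p) * b0) =
  p * (a1 * b1) + (1 - p) * (a0 * b0) + p * (1 - p) * ((a1 - a0) * (b0 - b1)) by ring.
lra.
Qed.

End Ex.
Arguments Ex_ext {R T} [p U h1 h2].

Section Janson.
Variable R : realType.
Variables (T I : finType) (p : R) (U : {set T}) (X : I -> {set T}).
Hypothesis p01 : 0 <= p <= 1.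

Definition FailE (J : {set I}) (E : {set T}) : bool := [forall j in J, ~~ (X j \subset E)].
Definition ov (i j : I) : bool := ~~ [disjoint X i & X j].
Definition rr (K : {set I}) (i : I) : R :=
  p ^+ #|X i| - \sum_(j in K | (j != i) && ov i j) p ^+ #|X i :|: X j|.

Lemma Fail_sub (J J' : {set I}) E : J \subset J' -> FailE J' E -> FailE J E.
Proof.
move=> JJ /forallP H; apply/forallP => j; apply/implyP => jJ.
by have /implyP := H j; apply; apply: (subsetP JJ).
Qed.

Lemma ind_ge0 (b : bool) : 0 <= (b%:R : R).
Proof. by case: b. Qed.

Lemma Ex_ind (Z : {set T}) : Z \subset U -> Ex p U (fun E => (Z \subset E)%:R) = p ^+ #|Z|.
Proof.
move=> ZU; rewrite (Ex_ext (h2 := fun E => (Z \subset E)%:R * (fun _ => 1) E)); last first.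
  by move=> E _; rewrite mulr1.
by rewrite Ex_indep // Ex_const mulr1.
Qed.

Lemma janson (K : {set I}) : (forall i : I, i \in K -> X i \subset U) ->
  forall J : {set I}, J \subset K -> Ex p U (fun E => (FailE J E)%:R) <= expR (- \sum_(i in J) rr K i).
Proof.
move=> XU; elim/set_ind => [|i J iJ IH] JK.
  rewrite big_set0 oppr0 expR0 (Ex_ext (h2 := fun _ => 1)) ?Ex_const //.
  move=> E _; have -> : FailE set0 E = true by apply/forallP => j; rewrite inE.
  by rewrite mulr1n.
have iK : i \in K by apply: (subsetP JK); rewrite !inE eqxx.
have JK' : J \subset K by apply: subset_trans JK; apply: subsetUr.
have {}IH := IH JK'.
set Jd := [set j in J | ov i j]; set Jb := [set j in J | ~~ ov i j].
set P' := Ex p U (fun E => (FailE J E)%:R).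
set Pb := Ex p U (fun E => (FailE Jb E)%:R).
set r' := p ^+ #|X i| - \sum_(j in Jd) p ^+ #|X i :|: X j|.
have F1 : forall E, FailE (i |: J) E = ~~ (X i \subset E) && FailE J E.
  move=> E; apply/forallP/andP => [H|[H1 /forallP H2] j].
    split; first by have := H i; rewrite !inE eqxx.
    by apply/forallP => j; apply/implyP => jJ; have := H j; rewrite !inE jJ orbT.
  rewrite !inE; case: (j =P i) => [->|] //= _; exact: H2.
have F2 : forall E, FailE J E = FailE Jb E && FailE Jd E.
  move=> E; apply/forallP/andP => [H|[/forallP H1 /forallP H2] j].
    by split; apply/forallP => j; rewrite !inE; apply/implyP => /andP[jJ _];
      have /implyP := H j; apply.
  apply/implyP => jJ; case: (boolP (ov i j)) => o.
    by have /implyP := H2 j; apply; rewrite !inE jJ o.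
  by have /implyP := H1 j; apply; rewrite !inE jJ o.
have E1 : Ex p U (fun E => (FailE (i |: J) E)%:R) =
    P' - Ex p U (fun E => (X i \subset E)%:R * (FailE J E)%:R).
  rewrite -Ex_sub; apply: Ex_ext => E _; rewrite F1.
  by case: (X i \subset E); case: (FailE J E); rewrite /= ?mul1r ?mul0r ?subr0 ?subrr.
have E2 : Ex p U (fun E => (X i \subset E)%:R * (FailE Jb E)%:R) -
    \sum_(j in Jd) Ex p U (fun E => (X i :|: X j \subset E)%:R * (FailE Jb E)%:R)
    <= Ex p U (fun E => (X i \subset E)%:R * (FailE J E)%:R).
  rewrite -Ex_sum -Ex_sub; apply: (Ex_le p01) => E _.
  have sge0 : 0 <= \sum_(j in Jd) ((X i :|: X j \subset E)%:R * (FailE Jb E)%:R : R).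
    by apply: sumr_ge0 => j _; rewrite mulr_ge0 ?ind_ge0.
  rewrite F2; case: (boolP (FailE Jd E)) => fd.
    rewrite andbT lerBlDr lerDl //.
  rewrite andbF mulr0 subr_le0.
  case: (boolP (X i \subset E)) => xi; last by rewrite mul0r; apply: sumr_ge0 => k _; rewrite mulr_ge0 ?ind_ge0.
  case: (boolP (FailE Jb E)) => fb; last by rewrite mulr0; apply: sumr_ge0 => k _; rewrite mulr_ge0 ?ind_ge0.
  move: fd; rewrite negb_forall => /existsP [j]; rewrite negb_imply negbK => /andP[jd xj].
  rewrite (bigD1 j) //= subUset xi xj /= !mulr1 lerDl.
  by apply: sumr_ge0 => k _; rewrite ?mulr1; apply: ind_ge0.
have HBb : forall E, FailE Jb (E :\: X i) = FailE Jb E.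
  move=> E; apply/forallP/forallP => H j; apply/implyP => jb; have /implyP := H j.
    move=> /(_ jb); apply: contra => s; apply/subsetP => y yj.
    move: jb; rewrite !inE => /andP[_]; rewrite negbK => dis.
    by rewrite (subsetP s y yj) andbT ?(disjointFl dis yj) ?(disjointFr dis yj).
  move=> /(_ jb); apply: contra => s; apply: subset_trans s _; apply: subsetDl.
have E3 : Ex p U (fun E => (X i \subset E)%:R * (FailE Jb E)%:R) = p ^+ #|X i| * Pb.
  by rewrite Ex_indep // ?XU // => E; rewrite HBb.
have E4 : forall j, j \in Jd ->
    Ex p U (fun E => (X i :|: X j \subset E)%:R * (FailE Jb E)%:R)
    <= p ^+ #|X i :|: X j| * Pb.
  move=> j; rewrite inE => /andP[jJ _].
  rewrite -Ex_ind; last by rewrite subUset XU // XU // (subsetP JK') //.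
  apply: (Ex_harris p01) => E F EF.
    case: (boolP (X i :|: X j \subset E)) => h; last by rewrite ind_ge0.
    by rewrite (subset_trans h EF).
  case: (boolP (FailE Jb F)) => h; last by rewrite ind_ge0.
  have -> : FailE Jb E.
    apply/forallP => k; apply/implyP => kb; have /forallP/(_ k)/implyP/(_ kb) := h.
    by apply: contra => s; apply: subset_trans s EF.
  by [].
have E5 : Pb * r' <= Ex p U (fun E => (X i \subset E)%:R * (FailE J E)%:R).
  apply: le_trans E2; rewrite E3.
  have S : \sum_(j in Jd) Ex p U (fun E => (X i :|: X j \subset E)%:R * (FailE Jb E)%:R)
     <= Pb * \sum_(j in Jd) p ^+ #|X i :|: X j|.
    rewrite mulr_sumr; apply: ler_sum => j jd; rewrite mulrC; exact: E4.
  rewrite /r' mulrBr [Pb * p ^+ _]mulrC; move: S; set s1 := \sum_(j in Jd) _.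
  set s2 := Pb * _; move=> S; lra.
have E6 : rr K i <= r'.
  rewrite /rr /r' lerB //.
  rewrite [X in _ <= X]big_mkcond [X in X <= _]big_mkcond /=; apply: ler_sum => j _.
  case jd: (j \in Jd); last by case: ifP => // _; rewrite exprn_ge0 //; case/andP: p01.
  move: jd; rewrite inE => /andP[jJ o].
  have jK : j \in K by apply: (subsetP JK').
  have ji : j != i by apply: contraNneq iJ => <-.
  by rewrite jK ji o.
have P'0 : 0 <= P' by apply: (Ex_ge0 p01) => E _; apply: ind_ge0.
have PbP' : P' <= Pb.
  by apply: (Ex_le p01) => // E _; rewrite F2; case: (FailE Jb E); case: (FailE Jd E).
have PP' : Ex p U (fun E => (FailE (i |: J) E)%:R) <= P'.
  by apply: (Ex_le p01) => // E _; rewrite F1; case: (X i \subset E); case: (FailE J E).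
have key : Ex p U (fun E => (FailE (i |: J) E)%:R) <= P' * (1 - rr K i).
  move: E1 E5 PP' E6 PbP' P'0.
  set Pn := Ex p U (fun E => (FailE (i |: J) E)%:R).
  set Q := Ex p U (fun E => (X i \subset E)%:R * (FailE J E)%:R).
  set rk := rr K i; clearbody r' P' Pb Pn Q rk => E1 E5 PP' E6 PbP' P'0.
  case: (lerP 0 r') => r0.
    have a1 : P' * r' <= Pb * r' by rewrite ler_wpM2r.
    have a2 : P' * rk <= P' * r' by rewrite ler_wpM2l.
    rewrite E1 mulrBr mulr1; lra.
  have a3 : P' * rk <= 0 by rewrite mulr_ge0_le0 //; apply: ltW; apply: le_lt_trans r0.
  rewrite mulrBr mulr1; lra.
apply: (le_trans key); rewrite big_setU1 //= (opprD (rr K i)) expRD.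
apply: (le_trans (y := P' * expR (- rr K i))).
  apply: ler_wpM2l => //; have := expR_ge1Dx (- rr K i); move: (rr K i) => z; lra.
by rewrite [X in _ <= X]mulrC; apply: ler_wpM2r => //; apply: expR_ge0.
Qed.

End Janson.

Section Thin.
Variable R : realType.
Variable I : finType.

Lemma sum_ind0 (S K0 : {set I}) (F : I -> R) : S \subset K0 ->
  \sum_(i in K0) F i * (i \in S)%:R = \sum_(i in S) F i.
Proof.
move=> SK; rewrite big_mkcond [RHS]big_mkcond; apply: eq_bigr => i _.
case iS: (i \in S); last by rewrite mulr0; case: (i \in K0).
by rewrite (subsetP SK i iS) mulr1.
Qed.

Lemma sum_ind1 (S K0 : {set I}) (P : pred I) (F : I -> R) : S \subset K0 ->
  \sum_(i in K0 | P i) F i * (i \in S)%:R = \sum_(i in S | P i) F i.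
Proof.
move=> SK; rewrite big_mkcond [RHS]big_mkcond; apply: eq_bigr => i _.
case iS: (i \in S); last by case: (i \in K0); case: (P i); rewrite /= ?mulr0.
by rewrite (subsetP SK i iS) mulr1.
Qed.

Lemma thin (K0 : {set I}) (q : R) (a : I -> R) (b : I -> I -> R) (c : I -> I -> bool) :
  0 <= q <= 1 -> exists S : {set I}, S \subset K0 /\
   q * \sum_(i in K0) a i - q ^+ 2 * \sum_(i in K0) \sum_(j in K0 | (j != i) && c i j) b i j
   <= \sum_(i in S) a i - \sum_(i in S) \sum_(j in S | (j != i) && c i j) b i j.
Proof.
move=> q01.
pose f (S : {set I}) := \sum_(i in K0) a i * (i \in S)%:R -
   \sum_(i in K0) \sum_(j in K0 | (j != i) && c i j) b i j * ((i \in S)%:R * (j \in S)%:R).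
have m1 : forall i, i \in K0 -> Ex q K0 (fun S => (i \in S)%:R) = q.
  move=> i iK; rewrite (Ex_ext (h2 := fun S => ([set i] \subset S)%:R)); last first.
    by move=> S _; rewrite sub1set.
  by rewrite Ex_ind ?sub1set // cards1 expr1.
have m2 : forall i j, i \in K0 -> j \in K0 -> j != i ->
    Ex q K0 (fun S => (i \in S)%:R * (j \in S)%:R) = q ^+ 2.
  move=> i j iK jK ji.
  rewrite (Ex_ext (h2 := fun S => ([set i; j] \subset S)%:R)); last first.
    by move=> S _; rewrite subUset !sub1set; case: (i \in S); case: (j \in S);
       rewrite /= ?mulr1 ?mulr0 ?mul0r.
  by rewrite Ex_ind ?subUset ?sub1set ?iK ?jK // cards2 eq_sym ji.
have Ef : Ex q K0 f = q * \sum_(i in K0) a i -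
    q ^+ 2 * \sum_(i in K0) \sum_(j in K0 | (j != i) && c i j) b i j.
  rewrite /f Ex_sub !Ex_sum; congr (_ - _).
    rewrite mulr_sumr; apply: eq_bigr => i iK; by rewrite Ex_scale m1 // mulrC.
  rewrite mulr_sumr; apply: eq_bigr => i iK; rewrite Ex_sum mulr_sumr.
  apply: eq_bigr => j /andP[jK /andP[ji _]]; by rewrite Ex_scale m2 // mulrC.
have [S SK Smax] := @arg_maxP _ _ _ K0 (fun S : {set I} => S \subset K0) f (subxx K0).
exists S; split => //.
have -> : \sum_(i in S) a i - \sum_(i in S) \sum_(j in S | (j != i) && c i j) b i j = f S.
  rewrite /f -(sum_ind0 a SK); congr (_ - _).
  rewrite -(sum_ind0 _ SK); apply: eq_bigr => i iK.
  rewrite -(sum_ind1 _ _ SK) mulr_suml; apply: eq_bigr => j _.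
  by rewrite mulrAC -mulrA.
apply: le_trans (_ : Ex q K0 f <= f S); first by rewrite Ef.
rewrite -[f S](Ex_const q K0); apply: (Ex_le q01) => E EK; exact: Smax.
Qed.

End Thin.


Lemma arith (R : realType) (beta C Kr nn m P Y mu D : R) :
  0 < beta -> 1 <= Kr -> 0 <= nn -> 0 <= m -> 0 <= P -> 0 <= Y -> 0 <= D ->
  C * beta = 12 * Kr -> beta * Y <= m -> C * nn <= Y * P ->
  C * nn * D <= m * Kr * Y * (P * P) -> mu = m * P ->
  exists q, 0 <= q <= 1 /\ 3 * nn <= q * mu - q ^+ 2 * D.
Proof.
move=> b0 K1 n0 m0 P0 Y0 D0 CB bY CP CD ->.
have mPge : 12 * nn <= m * P.
  have h1 : beta * Y * P <= m * P by apply: ler_wpM2r.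
  have h2 : beta * (C * nn) <= beta * (Y * P) by apply: ler_wpM2l => //; apply: ltW.
  have h3 : beta * (C * nn) = 12 * Kr * nn by rewrite mulrA [beta * C]mulrC CB.
  have h4 : 12 * nn <= 12 * Kr * nn.
    rewrite -subr_ge0 (_ : 12 * Kr * nn - 12 * nn = 12 * nn * (Kr - 1)); last by ring.
    by rewrite mulr_ge0 ?mulr_ge0 // subr_ge0.
  rewrite -mulrA in h1; lra.
case: (lerP (2 * D) (m * P)) => hD.
  exists 1; split; first by rewrite ler01 lexx.
  rewrite expr1n !mul1r; lra.
have Dp : 0 < D by lra.
exists (m * P / (2 * D)); split.
  apply/andP; split; first by apply: divr_ge0; [apply: mulr_ge0 | lra].
  by rewrite ler_pdivrMr ?mul1r; lra.
have -> : m * P / (2 * D) * (m * P) - (m * P / (2 * D)) ^+ 2 * D = (m * P) ^+ 2 / (4 * D).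
  by field; lra.
rewrite ler_pdivlMr; last by lra.
have k1 : 12 * nn * D * Kr <= beta * (m * Kr * Y * (P * P)).
  have -> : 12 * nn * D * Kr = beta * (C * nn * D).
    by rewrite !mulrA [beta * C]mulrC CB; ring.
  by apply: ler_wpM2l => //; apply: ltW.
have k2 : 12 * nn * D <= beta * m * Y * (P * P).
  rewrite -(@ler_pM2r _ Kr); last by lra.
  apply: le_trans k1 _; rewrite le_eqVlt; apply/orP; left; apply/eqP; ring.
have k3 : beta * m * Y * (P * P) <= m * m * (P * P).
  rewrite (_ : beta * m * Y = beta * Y * m); last by ring.
  apply: ler_wpM2r; first by apply: mulr_ge0.
  by apply: ler_wpM2r.
rewrite expr2; lra.
Qed.

Section Graph.
Variable R : realType.
Variable v : nat.
Variable EF : {set {set 'I_v}}.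
Hypothesis EF2 : forall e, e \in EF -> #|e| = 2%N.

Definition XF (n : nat) (f : {ffun 'I_v -> 'I_n}) : {set {set 'I_n}} := [set f @: e | e : {set 'I_v} in EF].

Lemma XF_sub n (f : {ffun 'I_v -> 'I_n}) (E : {set {set 'I_n}}) :
  (XF f \subset E) = [forall e in EF, (f @: e) \in E].
Proof.
apply/subsetP/forallP => H.
  move=> e; apply/implyP => eF; apply: H; exact: imset_f.
move=> A /imsetP [e eF ->]; have /implyP := H e; exact.
Qed.

Lemma XF_pairs n (f : {ffun 'I_v -> 'I_n}) : injective f -> XF f \subset pairs n.
Proof.
move=> fi; apply/subsetP => A /imsetP [e eF ->]; rewrite inE card_imset //.
by rewrite EF2.
Qed.

Lemma XF_card n (f : {ffun 'I_v -> 'I_n}) : injective f -> #|XF f| = #|EF|.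
Proof. move=> fi; rewrite card_imset //; exact: imset_inj. Qed.

Lemma count_bound n (p C : R) (f : {ffun 'I_v -> 'I_n}) (K0 : {set {ffun 'I_v -> 'I_n}}) :
  0 <= p -> (0 < v)%N -> injective f -> (forall g, g \in K0 -> injective g) ->
  Phi_ge EF n p (C * n%:R) ->
  C * n%:R * \sum_(g in K0 | (g != f) && ov (@XF n) f g) p ^+ #|XF f :|: XF g|
   <= (2 ^ v * v ^ v * n ^ v)%:R * p ^+ (#|EF| + #|EF|).
Proof.
move=> p0 v0 fi gi Phi.
set Im := f @: [set: 'I_v].
have step : forall g, g \in K0 -> ov (@XF n) f g ->
   C * n%:R * p ^+ #|XF f :|: XF g| <=
   (n ^ #|[set x | g x \in Im]|)%:R * p ^+ (#|EF| + #|EF|).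
  move=> g gK o; have gI := gi g gK.
  set S := [set x | g x \in Im]; set EH := [set e in EF | g @: e \in XF f].
  have sub : subgraph EF S EH.
    split; first by apply/subsetP => e; rewrite inE => /andP[].
    move=> e; rewrite inE => /andP[eF /imsetP [e' e'F ge]].
    apply/subsetP => x xe; rewrite inE.
    have : g x \in g @: e by apply: imset_f.
    rewrite ge => /imsetP [y ye' ->]; apply: imset_f; by rewrite inE.
  have cap : XF f :&: XF g = (fun e : {set 'I_v} => g @: e) @: EH.
    apply/setP => A; rewrite inE; apply/andP/imsetP => [[Af /imsetP [e eF Ae]]|[e]].
      by exists e => //; rewrite inE eF -Ae Af.
    rewrite inE => /andP[eF gef] ->; split => //; exact: imset_f.
  have cardEH : #|EH| = #|XF f :&: XF g| by rewrite cap card_imset //; apply: imset_inj.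
  have pos : (0 < #|EH|)%N by rewrite cardEH card_gt0 setI_eq0; exact: o.
  have H := Phi S EH sub pos.
  have e2 : (#|EH| + #|XF f :|: XF g| = #|EF| + #|EF|)%N.
    by rewrite cardEH addnC cardsUI !XF_card.
  rewrite natrX -e2 exprD mulrA.
  by apply: ler_wpM2r => //; apply: exprn_ge0.
apply: (le_trans (y := \sum_(g in K0 | (g != f) && ov (@XF n) f g)
     (n ^ #|[set x | g x \in Im]|)%:R * p ^+ (#|EF| + #|EF|))).
  rewrite mulr_sumr; apply: ler_sum => g /andP[gK /andP[_ o]]; exact: step.
apply: (le_trans (y := \sum_(g : {ffun 'I_v -> 'I_n})
     (n ^ #|[set x | g x \in Im]|)%:R * p ^+ (#|EF| + #|EF|))).
  rewrite [X in X <= _]big_mkcond /=; apply: ler_sum => g _.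
  by case: ifP => // _; rewrite mulr_ge0 ?exprn_ge0.
rewrite -mulr_suml -natr_sum; apply: ler_wpM2r; first exact: exprn_ge0.
by rewrite ler_nat; apply: count_nat.
Qed.


Lemma Gnp_Ex n (p : R) (A : pred {set {set 'I_n}}) :
  @Gnp_prob R n p A = Ex p (pairs n) (fun E => (A E)%:R).
Proof.
rewrite /Gnp_prob /Ex big_mkcondr /=; apply: eq_bigr => E _; rewrite /wt.
by case: (A E); rewrite ?mulr1 ?mulr0.
Qed.

Lemma fam_bound n (p beta C : R) (Kn : nat) (K0 : {set {ffun 'I_v -> 'I_n}}) :
  0 <= p <= 1 -> 0 < beta -> (0 < v)%N -> EF != set0 -> Kn = (2 ^ v * v ^ v)%N ->
  C * beta = 12 * Kn%:R ->
  (forall f, f \in K0 -> injective f) -> beta * n%:R ^+ v <= #|K0|%:R ->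
  Phi_ge EF n p (C * n%:R) ->
  Ex p (pairs n) (fun E => (FailE (@XF n) K0 E)%:R) <= expR (- (3 * n%:R)).
Proof.
move=> p01 b0 v0 EFn Kdef CB Finj Fsz Phi.
have p0 : 0 <= p by case/andP: p01.
set X := @XF n.
have XU : forall f, f \in K0 -> X f \subset pairs n.
  by move=> f fK; apply: XF_pairs; apply: Finj.
set e := #|EF|.
set mu := \sum_(f in K0) p ^+ #|X f|.
set D := \sum_(f in K0) \sum_(g in K0 | (g != f) && ov X f g) p ^+ #|X f :|: X g|.
have muE : mu = #|K0|%:R * p ^+ e.
  have -> : mu = \sum_(f in K0) p ^+ e.
    by apply: eq_bigr => f fK; rewrite /X XF_card //; exact: Finj.
  by rewrite sumr_const mulr_natl.
have D0 : 0 <= D by apply: sumr_ge0 => f _; apply: sumr_ge0 => g _; apply: exprn_ge0.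
have DB : C * n%:R * D <= #|K0|%:R * Kn%:R * n%:R ^+ v * (p ^+ e * p ^+ e).
  rewrite /D mulr_sumr.
  apply: (le_trans (y := \sum_(f in K0) (2 ^ v * v ^ v * n ^ v)%:R * p ^+ (e + e))).
    apply: ler_sum => f fK; apply: count_bound => //; exact: Finj.
  have cE : (2 ^ v * v ^ v * n ^ v)%:R = Kn%:R * n%:R ^+ v :> R.
    by rewrite Kdef natrM natrX.
  by rewrite sumr_const cE -(mulr_natl (Kn%:R * n%:R ^+ v * p ^+ (e + e))) exprD !mulrA.
have PhiF : C * n%:R <= n%:R ^+ v * p ^+ e.
  have := Phi [set: 'I_v] EF; rewrite cardsT card_ord; apply.
    by split => // e0 _; apply: subsetT.
  by rewrite card_gt0.
have [q [q01 qb]] : exists q, 0 <= q <= 1 /\ 3 * n%:R <= q * mu - q ^+ 2 * D.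
  have K1 : 1 <= Kn%:R :> R by rewrite Kdef ler1n muln_gt0 !expn_gt0 v0.
  exact: (@arith R beta C Kn%:R n%:R #|K0|%:R (p ^+ e) (n%:R ^+ v) mu D b0 K1
    (ler0n _ _) (ler0n _ _) (exprn_ge0 _ p0) (exprn_ge0 _ (ler0n _ _)) D0 CB Fsz PhiF DB muE).
have [S [SK Sb]] := thin K0 (fun f => p ^+ #|X f|) (fun f g => p ^+ #|X f :|: X g|)
   (fun f g => ov X f g) q01.
apply: (le_trans (y := Ex p (pairs n) (fun E => (FailE X S E)%:R))).
  apply: (Ex_le p01) => E _; case: (boolP (FailE X K0 E)) => h; last by apply: ind_ge0.
  by rewrite (Fail_sub SK h).
have XS : forall f, f \in S -> X f \subset pairs n.
  by move=> f fS; apply: XU; apply: (subsetP SK).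
apply: (le_trans (@janson R _ _ p (pairs n) X p01 S XS S (subxx S))).
rewrite ler_expR lerN2 /rr sumrB.
by apply: le_trans qb Sb.
Qed.

End Graph.

Unset Implicit Arguments.
Set Strict Implicit.

Theorem corollary2p9 (R : realType) (beta : R) (v : nat)
  (EF : {set {set 'I_v}}) :
  0 < beta ->
  (forall e, e \in EF -> #|e| = 2%N) ->
  exists C : R, 0 < C /\
    forall eps : R, 0 < eps -> exists N : nat, forall n : nat, (N <= n)%N ->
    forall (t : nat) (Fam : 'I_t -> {set {ffun 'I_v -> 'I_n}}) (p : R),
      (1 <= t <= 2 ^ n)%N ->
      0 <= p <= 1 ->
      (forall i f, f \in Fam i -> injective f) ->
      (forall i, beta * n%:R ^+ v <= #|Fam i|%:R) ->
      Phi_ge EF n p (C * n%:R) ->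
      1 - eps <= @Gnp_prob R n p (all_embed EF Fam).
Proof.
move=> b0 EF2.
set Kn := (2 ^ v * v ^ v)%N.
have Kn0 : (0 < Kn)%N by rewrite muln_gt0 !expn_gt0 /= eqn0Ngt orbN.
exists (12 * Kn%:R / beta); split.
  by rewrite divr_gt0 // mulr_gt0 // ltr0n.
move=> eps eps0.
exists (Num.truncn eps^-1).+1 => n Nn t Fam p /andP[t1 t2] p01 Finj Fsz Phi.
have n1 : (1 <= n)%N by apply: leq_trans Nn.
have neps : eps^-1 < n%:R.
  apply: (lt_le_trans (truncnS_gt _)); by rewrite ler_nat.
rewrite Gnp_Ex.
case: (EF =P set0) => [EF0|/eqP EFn].
  rewrite (Ex_ext (h2 := fun _ => 1)); first by rewrite Ex_const lerBlDr lerDl ltW.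
  move=> E _; suff -> : all_embed EF Fam E by [].
  apply/forallP => i.
  have : (0 < #|Fam i|)%N.
    rewrite -(ltr0n R); apply: lt_le_trans (Fsz i).
    by rewrite mulr_gt0 // exprn_gt0 // ltr0n.
  rewrite card_gt0 => /set0Pn [f fi]; apply/existsP; exists f; rewrite fi /=.
  by apply/forallP => e; rewrite EF0 inE.
have v0 : (0 < v)%N.
  case/set0Pn: EFn => e eF; have ce := EF2 e eF.
  by rewrite -(card_ord v); apply: leq_trans (max_card e); rewrite ce.
have fb : forall i, Ex p (pairs n) (fun E => (FailE (XF EF (n:=n)) (Fam i) E)%:R)
    <= expR (- (3 * n%:R)).
  move=> i; apply: (@fam_bound R v EF EF2 n p beta (12 * Kn%:R / beta) Kn (Fam i)
     p01 b0 v0 EFn erefl _ _ (Fsz i) Phi).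
  - by rewrite mulrAC -mulrA divff ?mulr1 // gt_eqF.
  - by move=> f; apply: Finj.
apply: (le_trans (y := Ex p (pairs n)
   (fun E => 1 - \sum_(i < t) (FailE (XF EF (n:=n)) (Fam i) E)%:R))); last first.
  apply: (Ex_le p01) => E _.
  case h: (all_embed EF Fam E).
    by rewrite lerBlDr lerDl; apply: sumr_ge0 => i _; apply: ind_ge0.
  move/negbT: h; rewrite negb_forall => /existsP [i hi].
  have Fi : FailE (XF EF (n:=n)) (Fam i) E.
    apply/forallP => f; apply/implyP => fi; rewrite XF_sub.
    by move: hi; rewrite negb_exists => /forallP /(_ f); rewrite fi.
  rewrite (bigD1 i) //= Fi /=.
  have : 0 <= \sum_(j < t | j != i) ((FailE (XF EF (n:=n)) (Fam j) E)%:R : R).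
    by apply: sumr_ge0 => j _; apply: ind_ge0.
  move: (\sum_(j < t | j != i) _) => s s0; lra.
rewrite Ex_sub Ex_const Ex_sum.
apply: lerB => //.
apply: (le_trans (y := \sum_(i < t) expR (- (3 * n%:R)))); first by apply: ler_sum => i _.
rewrite sumr_const card_ord expRN -(mulr_natl (expR (3 * n%:R))^-1 t).
have E3 : 4 <= expR (3 : R) by have := expR_ge1Dx (3 : R); lra.
have E3n : (2 ^ n * 2 ^ n)%:R <= expR (3 * n%:R) :> R.
  rewrite mulrC expRM_natl -expnMn natrX.
  by apply: lerXn2r => //; rewrite ?nnegrE ?expR_ge0.
have en : 1 <= eps * (2 ^ n)%:R.
  have : 1 < eps * n%:R.
    have h : 1 / eps < n%:R by rewrite div1r.
    by rewrite ltr_pdivrMr // mulrC in h.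
  have : (n <= 2 ^ n)%N by apply: ltnW; apply: ltn_expl.
  rewrite -(ler_nat R) => h1 h2; have := ler_wpM2l (ltW eps0) h1; lra.
have tn : t%:R <= (2 ^ n)%:R :> R by rewrite ler_nat.
rewrite ler_pdivrMr ?expR_gt0 //.
have := ler_wpM2l (ltW eps0) E3n; rewrite natrM => h.
have h2 : (2 ^ n)%:R <= eps * (2 ^ n)%:R * (2 ^ n)%:R :> R.
  by rewrite -[X in X <= _]mul1r ler_wpM2r.
move: h h2 tn en; move: (expR _) ((2 ^ n)%:R) => ex a; rewrite !mulrA; lra.
Qed.
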